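(* Consider any fair, well-formed execution of COP as described in the context, with history $\sigma$ (and $S$ correct or Byzantine). If some client $C_k$ confirms an operation $o_1$ before an operation $o_2$, then $o_2$ does not precede $o_1$ in $\sigma$ (i.e., it is not the case that $o_2$ completes before $o_1$ is invoked).
   Context: System model. Clients $C_1,\dots,C_n$ and server $S$ in an asynchronous system, each client connected to $S$ by a reliable FIFO channel; clients are correct; $S$ is correct or Byzantine (may send arbitrary messages). Executions are fair and well-formed. Functionality. $F$ is deterministic over states $\mathcal{S}$, operations $\mathcal{O}$, responses $\mathcal{R}$: $F(s,o)=(s',r)$, extended to sequences by applying operations in order. $\mathrm{commute}_F(s,\rho_1,\rho_2)$ is true iff every interleaving of sequences $\rho_1,\rho_2$ (preserving each one's internal order) executed from $s$ yields the same final state and the same respective responses. Cryptography (ideal). $\mathrm{hash}$ is ideal collision-free; $\mathrm{sign}_i$ is invocable only by $C_i$ and $\mathrm{verify}_i(\phi,m)$ is true iff $C_i$ previously executed $\mathrm{sign}_i(m)$ obtaining $\phi$. $\|$ is concatenation. COP client $C_i$. State: $u$ (initially $\bot$); $c$ (initially $0$); map $H$ with $H[0]=\mathrm{null}$; map $Z$ to $\{\mathrm{success},\mathrm{abort}\}$; state $s$ (initially $s_0$). (1) On invocation of $o$: $u\leftarrow o$, send $\langle\mathrm{invoke},o,c,\mathrm{sign}_i(\mathrm{invoke}\|o\|i)\rangle$ to $S$. (2) On $\langle\mathrm{reply},\omega\rangle$: $\gamma,\mu\leftarrow\langle\rangle$. For $k=1,\dots,\mathrm{length}(\omega)$: $(o,j,\tau)=\omega[k]$,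 $l=c+k$; halt if $\mathrm{verify}_j(\tau,\mathrm{invoke}\|o\|j)$ fails; if $H[l]$ undefined set $H[l]\leftarrow\mathrm{hash}(H[l-1]\|o\|l\|j)$, else halt if $H[l]\neq\mathrm{hash}(H[l-1]\|o\|l\|j)$; if $j=i$ and $Z[l]=\mathrm{success}$ append $o$ to $\mu$, else if $j\neq i$ append $o$ to $\gamma$. Halt if $\omega$ is empty or its last entry has operation $\neq u$ or index $\neq i$. $(a,r)\leftarrow F(s,\mu)$. If $\mathrm{commute}_F(a,\langle u\rangle,\gamma)$: $(a,r)\leftarrow F(a,u)$, $Z[l]\leftarrow\mathrm{success}$; else $r\leftarrow\bot$, $Z[l]\leftarrow\mathrm{abort}$. Send $\langle\mathrm{commit},u,l,H[l],Z[l],\mathrm{sign}_i(\mathrm{commit}\|u\|l\|H[l]\|Z[l])\rangle$ to $S$, set $u\leftarrow\bot$, output $r$. (3) On $\langle\mathrm{broadcast},o,q,h,z,\phi,j\rangle$: halt unless $q=c+1$ and $\mathrm{verify}_j(\phi,\mathrm{commit}\|o\|q\|h\|z)$; if $H[q]$ undefined set $H[q]\leftarrow\mathrm{hash}(H[q-1]\|o\|q\|j)$; halt if $h\neq H[q]$; if $z=\mathrm{success}$, $(s,\cdot)\leftarrow F(s,o)$; $c\leftarrow c+1$. COP server $S$ (when correct). State $t=0$, $b=0$, maps $I,O$ empty. On $\langle\mathrm{invoke},o,c,\tau\rangle$ from $C_i$: $t\leftarrow t+1$, $I[t]\leftarrow(o,i,\tau)$, send $\langle\mathrm{reply},\langle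 I[c+1],\dots,I[t]\rangle\rangle$ to $C_i$. On $\langle\mathrm{commit},o,q,h,z,\phi\rangle$ from $C_i$: $O[q]\leftarrow(o,h,z,\phi,i)$; while $O[b+1]$ defined: $b\leftarrow b+1$, send $\langle\mathrm{broadcast},o',b,h',z',\phi',j\rangle$ to all clients where $(o',h',z',\phi',j)=O[b]$. Terminology. The history $\sigma$ is the sequence of invocation and response events at the clients; $o$ precedes $o'$ in $\sigma$ if $o$ completes before $o'$ is invoked. A client commits an operation when it issues the commit signature in step (2). A client confirms an operation $o$ when it processes a broadcast message for $o$ in step (3) passing all checks. *)

(* Defs.v *)
From HB Require Import structures.
From mathcomp Require Import all_boot.


(* a hypothesis of the theorem.                                        *)
Record cop_params := CopParams {
  nclients : nat;
  Op : eqType;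
  St : Type;
  Res : Type;
  F : St -> Op -> St * Res;
  s0 : St;
  Hash : eqType;
  hnull : Hash;
  hash : Hash -> Op -> nat -> 'I_nclients -> Hash  (* hash(h || o || l || j) *)
}.

Set Implicit Arguments.
Unset Strict Implicit.
Unset Printing Implicit Defensive.

Inductive status := Success | Abort.
Definition status_eqb (a b : status) :=
  match a, b with Success, Success | Abort, Abort => true | _, _ => false end.
Lemma status_eqP : Equality.axiom status_eqb.
Proof. by do 2 case; constructor. Qed.
HB.instance Definition _ := hasDecEq.Build status status_eqP.

Section COP.
Variable P : cop_params.
Local Notation n := (nclients P).
Local Notation Op := (Op P).
Local Notation St := (St P).
Local Notation Res := (Res P).
Local Notation Hash := (Hash P).
Local Notation F := (F P).

Definition Fseq (s : St) (mu : seq Op) : St := foldl (fun s o => (F s o).1) s mu.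

Fixpoint run_inter (s : St) (w : seq (bool * Op)) : St * seq Res * seq Res :=
  match w with
  | [::] => (s, [::], [::])
  | (b, o) :: w' =>
      let sr := F s o in
      let '(s2, r1, r2) := run_inter sr.1 w' in
      if b then (s2, sr.2 :: r1, r2) else (s2, r1, sr.2 :: r2)
  end.

Definition interleaving (w : seq (bool * Op)) (rho1 rho2 : seq Op) : Prop :=
  map snd (filter fst w) = rho1 /\ map snd (filter (fun x => ~~ x.1) w) = rho2.

Definition commuteF (s : St) (rho1 rho2 : seq Op) : Prop :=
  forall w w', interleaving w rho1 rho2 -> interleaving w' rho1 rho2 ->
    run_inter s w = run_inter s w'.

Inductive payload :=
  | PInvoke of Op & 'I_n
  | PCommit of Op & nat & Hash & status.

Definition payload_enc (m : payload) : (Op * 'I_n) + (Op * nat * Hash * status) :=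
  match m with
  | PInvoke o i => inl (o, i)
  | PCommit o l h z => inr (o, l, h, z)
  end.
Definition payload_dec (x : (Op * 'I_n) + (Op * nat * Hash * status)) : payload :=
  match x with
  | inl (o, i) => PInvoke o i
  | inr (o, l, h, z) => PCommit o l h z
  end.
Lemma payload_encK : cancel payload_enc payload_dec. Proof. by case. Qed.
HB.instance Definition _ := Equality.copy payload (can_type payload_encK).

(* sign_j(m) returns the value (j, m); the log records every signing
   action performed by a client. *)
Definition sig := ('I_n * payload)%type.

Definition verify (lg : seq sig) (j : 'I_n) (phi : sig) (m : payload) : bool :=
  (phi == (j, m)) && ((j, m) \in lg).

Inductive smsg :=
  | Reply of seq (Op * 'I_n * sig)
  | Broadcast of Op & nat & Hash & status & sig & 'I_n.

Inductive cmsg :=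
  | MInvoke of Op & nat & sig
  | MCommit of Op & nat & Hash & status & sig.

Record cstate := CState {
  cu : option Op;                 (* u, None = bottom *)
  cc : nat;
  cH : nat -> option Hash;        (* H, None = undefined *)
  cZ : nat -> option status;
  cs : St;
  chalt : bool
}.

Definition cinit : cstate :=
  CState None 0 (fun l => if l == 0 then Some (hnull P) else None)
         (fun _ => None) (s0 P) false.

Definition upd {A : Type} (f : nat -> option A) (l : nat) (v : A) : nat -> option A :=
  fun x => if x == l then Some v else f x.

(* The loop of step (2), processing entries omega[k] with l = c + k
   (the argument [l] is the index of the first entry of [w]).
   None = the client halts; otherwise returns (H, gamma, mu). *)
Fixpoint proc_reply (i : 'I_n) (lg : seq sig) (Z : nat -> option status)
    (H : nat -> option Hash) (l : nat) (w : seq (Op * 'I_n * sig))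
    : option ((nat -> option Hash) * seq Op * seq Op) :=
  match w with
  | [::] => Some (H, [::], [::])
  | (o, j, tau) :: w' =>
      if ~~ verify lg j tau (PInvoke o j) then None else
      match H l.-1 with
      | None => None   (* H[l-1] undefined: cannot occur (H[c] is always defined) *)
      | Some hp =>
        let hl := hash P hp o l j in
        let okH := match H l with Some h => h == hl | None => true end in
        if ~~ okH then None else
        match proc_reply i lg Z (upd H l hl) l.+1 w' with
        | None => None
        | Some (H2, g, m) =>
            if j == i then
              (if Z l == Some Success then Some (H2, g, o :: m) else Some (H2, g, m))
            else Some (H2, o :: g, m)
        end
      end
  end.

Definition reply_checks (i : 'I_n) (lg : seq sig) (c : cstate) (w : seq (Op * 'I_n * sig))
    : option ((nat -> option Hash) * seq Op * seq Op * Op * nat) :=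
  match proc_reply i lg (cZ c) (cH c) (cc c).+1 w with
  | None => None
  | Some (H', g, m) =>
      match rev w with
      | [::] => None
      | (o, j, _) :: _ =>
          if (cu c == Some o) && (j == i) then Some (H', g, m, o, cc c + size w)
          else None
      end
  end.

Definition bcast_checks (lg : seq sig) (c : cstate) (o : Op) (q : nat) (h : Hash)
    (z : status) (phi : sig) (j : 'I_n) : option (nat -> option Hash) :=
  if ~~ ((q == (cc c).+1) && verify lg j phi (PCommit o q h z)) then None else
  let H1 := match cH c q with
            | Some _ => Some (cH c)
            | None => match cH c q.-1 with
                      | Some hp => Some (upd (cH c) q (hash P hp o q j))
                      | None => None
                      end
            end in
  match H1 with
  | None => None
  | Some H1 => if H1 q == Some h then Some H1 else None
  end.

Record gstate := GState {
  gcl : 'I_n -> cstate;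
  glog : seq sig;
  gtoS : 'I_n -> seq cmsg;
  gtoC : 'I_n -> seq smsg
}.

Definition ginit : gstate :=
  GState (fun _ => cinit) [::] (fun _ => [::]) (fun _ => [::]).

Definition updI {A : Type} (f : 'I_n -> A) (i : 'I_n) (v : A) : 'I_n -> A :=
  fun x => if x == i then v else f x.

Inductive label :=
  | LInvoke of 'I_n & Op
  | LRespond of 'I_n & Op & option Res
  | LConfirm of 'I_n & Op & nat & 'I_n   (* C_i confirms o (index q, committed by C_j) *)
  | LInternal.

Inductive step : gstate -> label -> gstate -> Prop :=
  (* (1) invocation; well-formedness: only when no operation is pending *)
  | st_invoke g i o :
      ~~ chalt (gcl g i) -> cu (gcl g i) = None ->
      let c := gcl g i in
      let tau := (i, PInvoke o i) in
      step g (LInvoke i o)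
        (GState (updI (gcl g) i (CState (Some o) (cc c) (cH c) (cZ c) (cs c) false))
                (rcons (glog g) tau)
                (updI (gtoS g) i (rcons (gtoS g i) (MInvoke o (cc c) tau)))
                (gtoC g))
  (* the (possibly Byzantine) server sends an arbitrary message to C_i *)
  | st_server_send g i m :
      step g LInternal
        (GState (gcl g) (glog g) (gtoS g) (updI (gtoC g) i (rcons (gtoC g i) m)))
  | st_server_recv g i m rest :
      gtoS g i = m :: rest ->
      step g LInternal (GState (gcl g) (glog g) (updI (gtoS g) i rest) (gtoC g))
  | st_halted g i m rest :
      gtoC g i = m :: rest -> chalt (gcl g i) ->
      step g LInternal (GState (gcl g) (glog g) (gtoS g) (updI (gtoC g) i rest))
  | st_reply_success g i w rest H' gam mu u l :
      gtoC g i = Reply w :: rest -> ~~ chalt (gcl g i) ->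
      reply_checks i (glog g) (gcl g i) w = Some (H', gam, mu, u, l) ->
      let c := gcl g i in
      let a := Fseq (cs c) mu in
      commuteF a [:: u] gam ->
      let hl := odflt (hnull P) (H' l) in
      let phi := (i, PCommit u l hl Success) in
      step g (LRespond i u (Some (F a u).2))
        (GState (updI (gcl g) i (CState None (cc c) H' (upd (cZ c) l Success) (cs c) false))
                (rcons (glog g) phi)
                (updI (gtoS g) i (rcons (gtoS g i) (MCommit u l hl Success phi)))
                (updI (gtoC g) i rest))
  | st_reply_abort g i w rest H' gam mu u l :
      gtoC g i = Reply w :: rest -> ~~ chalt (gcl g i) ->
      reply_checks i (glog g) (gcl g i) w = Some (H', gam, mu, u, l) ->
      let c := gcl g i in
      let a := Fseq (cs c) mu in
      ~ commuteF a [:: u] gam ->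
      let hl := odflt (hnull P) (H' l) in
      let phi := (i, PCommit u l hl Abort) in
      step g (LRespond i u None)
        (GState (updI (gcl g) i (CState None (cc c) H' (upd (cZ c) l Abort) (cs c) false))
                (rcons (glog g) phi)
                (updI (gtoS g) i (rcons (gtoS g i) (MCommit u l hl Abort phi)))
                (updI (gtoC g) i rest))
  | st_reply_halt g i w rest :
      gtoC g i = Reply w :: rest -> ~~ chalt (gcl g i) ->
      reply_checks i (glog g) (gcl g i) w = None ->
      let c := gcl g i in
      step g LInternal
        (GState (updI (gcl g) i (CState (cu c) (cc c) (cH c) (cZ c) (cs c) true))
                (glog g) (gtoS g) (updI (gtoC g) i rest))
  | st_bcast_ok g i o q h z phi j rest H1 :
      gtoC g i = Broadcast o q h z phi j :: rest -> ~~ chalt (gcl g i) ->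
      bcast_checks (glog g) (gcl g i) o q h z phi j = Some H1 ->
      let c := gcl g i in
      let s' := if z == Success then (F (cs c) o).1 else cs c in
      step g (LConfirm i o q j)
        (GState (updI (gcl g) i (CState (cu c) (cc c).+1 H1 (cZ c) s' false))
                (glog g) (gtoS g) (updI (gtoC g) i rest))
  | st_bcast_halt g i o q h z phi j rest :
      gtoC g i = Broadcast o q h z phi j :: rest -> ~~ chalt (gcl g i) ->
      bcast_checks (glog g) (gcl g i) o q h z phi j = None ->
      let c := gcl g i in
      step g LInternal
        (GState (updI (gcl g) i (CState (cu c) (cc c) (cH c) (cZ c) (cs c) true))
                (glog g) (gtoS g) (updI (gtoC g) i rest)).

Inductive execution : seq label -> gstate -> Prop :=
  | ex_nil : execution [::] ginit
  | ex_step tr g l g' : execution tr g -> step g l g' -> execution (rcons tr l) g'.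

Definition ev (tr : seq label) (t : nat) : label := nth LInternal tr t.

Definition confirms_at (tr : seq label) (t : nat) (k : 'I_n) (o : Op) : Prop :=
  exists q j, ev tr t = LConfirm k o q j.

Definition invoked_at (tr : seq label) (t : nat) (o : Op) : Prop :=
  exists i, ev tr t = LInvoke i o.

Definition completed_at (tr : seq label) (t : nat) (o : Op) : Prop :=
  exists i r, ev tr t = LRespond i o r.

Definition precedes (tr : seq label) (o o' : Op) : Prop :=
  exists t t', t < t' /\ completed_at tr t o /\ invoked_at tr t' o'.

Definition unique_invocations (tr : seq label) : Prop :=
  forall t t' o, invoked_at tr t o -> invoked_at tr t' o -> t = t'.

End COP.

(* Main.v *)
Require Import Defs.
From mathcomp Require Import all_boot.
Set Implicit Arguments. Unset Strict Implicit.

Definition sig_op (P : cop_params) (m : payload P) : Op P :=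
  match m with PInvoke o _ => o | PCommit o _ _ _ => o end.

Definition Qt (P : cop_params) (tr : seq (label P)) (s : nat) (o : Op P) : Prop :=
  exists x, x < s /\ invoked_at tr x o.

Definition ChainP (P : cop_params) (Q : Op P -> Prop) (H : nat -> option (Hash P)) : Prop :=
  forall m h, 0 < m -> H m = Some h ->
    exists hp o j, H m.-1 = Some hp /\ h = hash P hp o m j /\ Q o.

Definition extends (P : cop_params) (H H2 : nat -> option (Hash P)) : Prop :=
  forall m h, H m = Some h -> H2 m = Some h.

Lemma ev_rcons (P : cop_params) (tr : seq (label P)) a t :
  t < size tr -> ev (rcons tr a) t = ev tr t.
Proof. by move=> h; rewrite /ev nth_rcons h. Qed.

Lemma ev_last (P : cop_params) (tr : seq (label P)) a :
  ev (rcons tr a) (size tr) = a.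
Proof. by rewrite /ev nth_rcons ltnn eqxx. Qed.

Lemma Qt_rcons (P : cop_params) (tr : seq (label P)) a s o :
  s <= size tr -> Qt tr s o -> Qt (rcons tr a) s o.
Proof.
move=> hs [x [hx [i hi]]]; exists x; split => //; exists i.
by rewrite ev_rcons // (leq_trans hx hs).
Qed.

Lemma Qt_mono (P : cop_params) (tr : seq (label P)) s s' o :
  s <= s' -> Qt tr s o -> Qt tr s' o.
Proof. by move=> hs [x [hx h]]; exists x; split => //; exact: leq_trans hx hs. Qed.

Lemma ChainP_mono (P : cop_params) (Q Q' : Op P -> Prop) H :
  (forall o, Q o -> Q' o) -> ChainP Q H -> ChainP Q' H.
Proof.
move=> hq hc m h hm hH; have [hp [o [j [h1 [h2 h3]]]]] := hc m h hm hH.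
by exists hp, o, j; split => //; split => //; apply: hq.
Qed.

Lemma ChainP_upd (P : cop_params) (Q : Op P -> Prop) H l hp o j :
  0 < l -> ChainP Q H -> H l.-1 = Some hp -> Q o ->
  (forall h, H l = Some h -> h = hash P hp o l j) ->
  ChainP Q (upd H l (hash P hp o l j)) /\ extends H (upd H l (hash P hp o l j)).
Proof.
move=> l0 hc hl1 hq hl; split; last first.
  move=> m h hm; rewrite /upd; case: eqP => [e|//]; subst m; by rewrite (hl _ hm).
move=> m h m0; rewrite /upd; case: eqP => [-> [<-]|nml].
  exists hp, o, j; rewrite (_ : (l.-1 == l) = false) //.
  by case: (l) l0 => //= l' _; rewrite ltn_eqF.
move=> hm; have [hp' [o' [j' [h1 [h2 h3]]]]] := hc m h m0 hm.
exists hp', o', j'; split => //; case: eqP => // e.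
by move: h1; rewrite e => h1; rewrite (hl _ h1).
Qed.

Lemma proc_reply_ext (P : cop_params) i lg Z (H : nat -> option (Hash P)) l w H2 g m :
  proc_reply i lg Z H l w = Some (H2, g, m) -> extends H H2.
Proof.
elim: w H l H2 g m => [|[[o j] tau] w IH] H l H2 g m /=.
  by case=> <- _ _.
case: (verify lg j tau (PInvoke o j)) => //=.
case: (H l.-1) => // hp.
case hH: (H l) => [h|] /=.
  case: eqP => // eh /=.
  case hr: proc_reply => [[[H3 g3] m3]|] //.
  have ex := IH _ _ _ _ _ hr.
  have e1 : extends H H3.
    move=> x y hx; apply: ex; rewrite /upd; case: eqP => // e; subst x.
    by rewrite hH in hx; case: hx => <-; rewrite eh.
  by case: eqP => _; [case: eqP => _ [<- _ _] | case=> <- _ _].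
case hr: proc_reply => [[[H3 g3] m3]|] //.
have ex := IH _ _ _ _ _ hr.
have e1 : extends H H3.
  move=> x y hx; apply: ex; rewrite /upd; case: eqP => // e; subst x.
  by rewrite hH in hx.
by case: eqP => _; [case: eqP => _ [<- _ _] | case=> <- _ _].
Qed.

Lemma proc_reply_cons (P : cop_params) i lg Z (H : nat -> option (Hash P)) l o j tau w H2 g m :
  proc_reply i lg Z H l ((o, j, tau) :: w) = Some (H2, g, m) ->
  exists hp g3 m3, [/\ (j, PInvoke o j) \in lg, H l.-1 = Some hp,
     (forall h, H l = Some h -> h = hash P hp o l j) &
     proc_reply i lg Z (upd H l (hash P hp o l j)) l.+1 w = Some (H2, g3, m3)].
Proof.
rewrite /=.
case hv: (verify lg j tau (PInvoke o j)) => //=.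
have hin : (j, PInvoke o j) \in lg by move: hv; rewrite /verify => /andP [].
case: (H l.-1) => // hp.
case hH: (H l) => [h|] /=.
  case: eqP => // eh /=.
  case hr: proc_reply => [[[H3 g3] m3]|] // hh.
  exists hp, g3, m3; split => //; first by move=> h' [<-].
  by rewrite hr; move: hh; case: eqP => _; [case: eqP => _ [<- _ _] | case=> <- _ _].
case hr: proc_reply => [[[H3 g3] m3]|] // hh.
exists hp, g3, m3; split => //.
by rewrite hr; move: hh; case: eqP => _; [case: eqP => _ [<- _ _] | case=> <- _ _].
Qed.

Lemma proc_reply_chain (P : cop_params) (Q : Op P -> Prop) i lg Z (H : nat -> option (Hash P)) l w H2 g m :
  0 < l -> (forall x, x \in lg -> Q (sig_op x.2)) -> ChainP Q H ->
  proc_reply i lg Z H l w = Some (H2, g, m) -> ChainP Q H2.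
Proof.
move=> + hlg.
elim: w H l H2 g m => [|[[o j] tau] w IH] H l H2 g m l0 hc.
  by case=> <- _ _.
move/proc_reply_cons => [hp [g3 [m3 [hin h1 h2 hr]]]].
have [c1 _] := ChainP_upd l0 hc h1 (hlg _ hin) h2.
exact: (IH _ l.+1 _ _ _ (ltn0Sn l) c1 hr).
Qed.

Lemma proc_reply_last (P : cop_params) i lg Z (H : nat -> option (Hash P)) l w x H2 g m :
  proc_reply i lg Z H l (rcons w x) = Some (H2, g, m) ->
  exists hp, H2 (l + size w) = Some (hash P hp x.1.1 (l + size w) x.1.2).
Proof.
elim: w H l H2 g m => [|[[o j] tau] w IH] H l H2 g m.
  case: x => [[o j] tau] /proc_reply_cons [hp [g3 [m3 [_ _ _ hr]]]].
  move: hr => /= [<- _ _]; exists hp; rewrite addn0 /upd eqxx //.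
rewrite rcons_cons => /proc_reply_cons [hp [g3 [m3 [_ _ _ hr]]]].
have [hp' e] := IH _ _ _ _ _ hr; exists hp'.
by rewrite /= addnS -addSn.
Qed.

Lemma bcast_spec (P : cop_params) (Q : Op P -> Prop) lg (c : cstate P) o q h z phi j H1 :
  bcast_checks lg c o q h z phi j = Some H1 ->
  [/\ q = (cc c).+1, (j, PCommit o q h z) \in lg, H1 q = Some h, extends (cH c) H1 &
   (ChainP Q (cH c) -> Q o -> ChainP Q H1)].
Proof.
rewrite /bcast_checks.
case hq: (q == (cc c).+1) => //=.
case hv: (verify lg j phi (PCommit o q h z)) => //=.
have hin : (j, PCommit o q h z) \in lg by move: hv; rewrite /verify => /andP [].
move/eqP: hq => hq.
case hH: (cH c q) => [h0|] /=.
  case: eqP => // e [<-]; split => //.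
case hp: (cH c q.-1) => [hp0|] //.
case: eqP => // e [<-]; split => //.
- by move=> m x hx; rewrite /upd; case: eqP => // em; subst m; rewrite hH in hx.
- move=> hc hqo.
  have q0 : 0 < q by rewrite hq.
  by case: (ChainP_upd (j := j) q0 hc hp hqo _) => // h' hh; rewrite hH in hh.
Qed.

Lemma reply_spec (P : cop_params) i lg (c : cstate P) w H' gam mu u l :
  reply_checks i lg c w = Some (H', gam, mu, u, l) ->
  exists g m, [/\ proc_reply i lg (cZ c) (cH c) (cc c).+1 w = Some (H', g, m),
     cu c = Some u, l = cc c + size w &
     exists hp, H' l = Some (hash P hp u l i)].
Proof.
rewrite /reply_checks.
case hr: proc_reply => [[[H2 g2] m2]|] //.
case: (lastP w) hr => [|w' [[o j] tau]] hr; first by rewrite /=.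
rewrite rev_rcons.
case: andP => // [[/eqP hu /eqP hj]] [<- _ _ <- <-].
exists g2, m2; split => //.
have [hp e] := proc_reply_last hr.
exists hp; move: e; rewrite /= hj size_rcons addnS -addSn //.
Qed.

Definition Pend (P : cop_params) (tr : seq (label P)) i o : Prop :=
  exists x, [/\ x < size tr, ev tr x = LInvoke i o &
    forall y, x < y -> y < size tr -> forall o' r, ev tr y <> LRespond i o' r].

Record Inv (P : cop_params) (tr : seq (label P)) (g : gstate P) : Prop := {
 I1 : forall i, ChainP (Qt tr (size tr)) (cH (gcl g i));
 I2 : forall x, x \in glog g -> Qt tr (size tr) (sig_op x.2);
 I3 : forall i o, cu (gcl g i) = Some o -> Pend tr i o;
 I4 : forall s i o r, s < size tr -> ev tr s = LRespond i o r ->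
   exists x, [/\ x < s, ev tr x = LInvoke i o &
    forall y, x < y -> y < s -> forall o' r', ev tr y <> LRespond i o' r'];
 I6 : forall j o l h z, (j, PCommit o l h z) \in glog g ->
   exists s, [/\ s < size tr, (exists r, ev tr s = LRespond j o r),
     (exists hp, h = hash P hp o l j) & exists B, B l = Some h /\ ChainP (Qt tr s) B]
}.

Lemma Qt_up (P : cop_params) (tr : seq (label P)) a o :
  Qt tr (size tr) o -> Qt (rcons tr a) (size (rcons tr a)) o.
Proof.
move=> h; apply: (@Qt_mono _ _ (size tr)); first by rewrite size_rcons.
exact: Qt_rcons.
Qed.

Lemma chain_up (P : cop_params) (tr : seq (label P)) a H :
  ChainP (Qt tr (size tr)) H -> ChainP (Qt (rcons tr a) (size (rcons tr a))) H.
Proof. apply: ChainP_mono => o; exact: Qt_up. Qed.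

Lemma Pend_up (P : cop_params) (tr : seq (label P)) a i o :
  (forall o' r, a <> LRespond i o' r) -> Pend tr i o -> Pend (rcons tr a) i o.
Proof.
move=> na [x [hx he hn]]; exists x; split.
- by rewrite size_rcons ltnW.
- by rewrite ev_rcons.
- move=> y xy; rewrite size_rcons ltnS leq_eqVlt => /orP [/eqP ->|ys].
    by rewrite ev_last.
  by rewrite ev_rcons //; apply: hn.
Qed.

Lemma Pend_new (P : cop_params) (tr : seq (label P)) i o :
  Pend (rcons tr (LInvoke i o)) i o.
Proof.
exists (size tr); split; first by rewrite size_rcons.
- by rewrite ev_last.
- by move=> y h1; rewrite size_rcons ltnS => h2; move: (leq_ltn_trans h2 h1); rewrite ltnn.
Qed.

Lemma I6_up (P : cop_params) (tr : seq (label P)) a j o l h :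
  (exists s, [/\ s < size tr, (exists r, ev tr s = LRespond j o r),
     (exists hp, h = hash P hp o l j) & exists B, B l = Some h /\ ChainP (Qt tr s) B]) ->
  (exists s, [/\ s < size (rcons tr a), (exists r, ev (rcons tr a) s = LRespond j o r),
     (exists hp, h = hash P hp o l j) & exists B, B l = Some h /\ ChainP (Qt (rcons tr a) s) B]).
Proof.
move=> [s [hs [r hr] hh [B [hB hc]]]]; exists s; split => //.
- by rewrite size_rcons ltnW.
- by exists r; rewrite ev_rcons.
- exists B; split => //; apply: ChainP_mono hc => o'; apply: Qt_rcons; exact: ltnW.
Qed.

Lemma I4_up (P : cop_params) (tr : seq (label P)) a :
  (forall s i o r, s < size tr -> ev tr s = LRespond i o r ->
   exists x, [/\ x < s, ev tr x = LInvoke i o &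
    forall y, x < y -> y < s -> forall o' r', ev tr y <> LRespond i o' r']) ->
  (forall i o r, a = LRespond i o r -> Pend tr i o) ->
  (forall s i o r, s < size (rcons tr a) -> ev (rcons tr a) s = LRespond i o r ->
   exists x, [/\ x < s, ev (rcons tr a) x = LInvoke i o &
    forall y, x < y -> y < s -> forall o' r', ev (rcons tr a) y <> LRespond i o' r']).
Proof.
move=> h4 hp s i o r; rewrite size_rcons ltnS leq_eqVlt => /orP [/eqP ->|hs].
  rewrite ev_last => /hp [x [hx he hn]]; exists x; split => //; first by rewrite ev_rcons.
  by move=> y xy ys; rewrite ev_rcons //; apply: hn.
rewrite ev_rcons // => /(h4 _ _ _ _ hs) [x [hx he hn]]; exists x; split => //.
  by rewrite ev_rcons // (ltn_trans hx hs).
by move=> y xy ys; rewrite ev_rcons ?(ltn_trans ys hs) //; apply: hn.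
Qed.

Lemma inv_same (P : cop_params) (tr : seq (label P)) g g' a :
  Inv tr g -> glog g' = glog g -> (forall x, cu (gcl g' x) = cu (gcl g x)) ->
  (forall x, ChainP (Qt tr (size tr)) (cH (gcl g' x))) ->
  (forall i o r, a <> LRespond i o r) -> Inv (rcons tr a) g'.
Proof.
move=> [h1 h2 h3 h4 h6] el eu ec na; split.
- by move=> x; apply: chain_up.
- by move=> x; rewrite el => /h2; apply: Qt_up.
- by move=> x o; rewrite eu => /h3; apply: Pend_up.
- by apply: I4_up => // i o r e; case: (na i o r).
- by move=> j o l h z; rewrite el => /h6; apply: I6_up.
Qed.

Lemma updI_E (P : cop_params) A (f : 'I_(nclients P) -> A) i v x :
  updI f i v x = if x == i then v else f x.
Proof. by []. Qed.

Lemma inv_reply (P : cop_params) (tr : seq (label P)) g0 i w H' gam mu u l z r cst S1 S2 :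
  Inv tr g0 -> reply_checks i (glog g0) (gcl g0 i) w = Some (H', gam, mu, u, l) ->
  cu cst = None -> cH cst = H' ->
  Inv (rcons tr (LRespond i u r))
    (GState (updI (gcl g0) i cst)
       (rcons (glog g0) (i, PCommit u l (odflt (hnull P) (H' l)) z)) S1 S2).
Proof.
move=> [h1 h2 h3 h4 h6] hr hu hH.
have [g2 [m2 [hp hcu hl [hh ehh]]]] := reply_spec hr.
have hc' : ChainP (Qt tr (size tr)) H'.
  exact: (proc_reply_chain (ltn0Sn _) h2 (h1 i) hp).
have hpend := h3 _ _ hcu.
split => /=.
- move=> x; rewrite updI_E; case: eqP => _; apply: chain_up => //; first by rewrite hH.
- move=> x; rewrite mem_rcons inE => /orP [/eqP ->|/h2]; last by apply: Qt_up.
  rewrite /=; case: hpend => y [hy hey _]; exists y; split; first by rewrite size_rcons ltnW.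
  by exists i; rewrite ev_rcons.
- move=> x o'; rewrite updI_E; case: eqP => [->|ne]; first by rewrite hu.
  by move/h3; apply: Pend_up => o2 r' [e _ _]; exact: ne (esym e).
- by apply: I4_up => // i' o' r' [<- <- _].
- move=> j o' l' h z'; rewrite mem_rcons inE => /orP [/eqP|/h6]; last by apply: I6_up.
  case=> -> -> -> -> _; exists (size tr); split.
  + by rewrite size_rcons.
  + by exists r; rewrite ev_last.
  + by exists hh; rewrite ehh.
  + exists H'; split; first by rewrite ehh.
    by apply: ChainP_mono hc' => o2; apply: Qt_rcons.
Qed.

Lemma inv_bcast (P : cop_params) (tr : seq (label P)) g0 i o q h z phi j H1 cst S1 S2 :
  Inv tr g0 -> bcast_checks (glog g0) (gcl g0 i) o q h z phi j = Some H1 ->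
  cu cst = cu (gcl g0 i) -> cH cst = H1 ->
  Inv (rcons tr (LConfirm i o q j)) (GState (updI (gcl g0) i cst) (glog g0) S1 S2).
Proof.
move=> hI hb hu hH; apply: (inv_same hI) => //=.
- by move=> x; rewrite updI_E; case: eqP => // ->.
- move=> x; rewrite updI_E; case: eqP => [_|_]; last exact: (I1 hI).
  have [_ hin _ _ hc] := bcast_spec (Qt tr (size tr)) hb.
  by rewrite hH; apply: hc; [exact: (I1 hI) | exact: (I2 hI) _ hin].
Qed.

Lemma inv_step (P : cop_params) (tr : seq (label P)) g a g' :
  Inv tr g -> step g a g' -> Inv (rcons tr a) g'.
Proof.
move=> hI hs; case: hs hI.
-
  move=> g0 i o hh hu c tau [h1 h2 h3 h4 h6]; split => /=.
  + by move=> x; rewrite updI_E; case: (x == i); apply: chain_up; apply: h1.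
  + move=> x; rewrite mem_rcons inE => /orP [/eqP ->|/h2]; last by apply: Qt_up.
    exists (size tr); split; first by rewrite size_rcons.
    by exists i; rewrite ev_last.
  + move=> x o'; rewrite updI_E; case: eqP => [-> [<-]|ne].
      exact: Pend_new.
    by move/h3; apply: Pend_up.
  + by apply: I4_up.
  + move=> j o' l h z; rewrite mem_rcons inE => /orP [/eqP //|/h6]; apply: I6_up.
- move=> g0 i m hI; apply: (inv_same hI) => // x; exact: (I1 hI).
- move=> g0 i m rest _ hI; apply: (inv_same hI) => // x; exact: (I1 hI).
- move=> g0 i m rest _ _ hI; apply: (inv_same hI) => // x; exact: (I1 hI).
- move=> g0 i w rest H' gam mu u l _ _ hr c a0 _ hl phi hI.
  by apply: (@inv_reply P tr g0 i w H' gam mu u l Success _ _ _ _ hI hr).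
- move=> g0 i w rest H' gam mu u l _ _ hr c a0 _ hl phi hI.
  by apply: (@inv_reply P tr g0 i w H' gam mu u l Abort _ _ _ _ hI hr).
- move=> g0 i w rest _ _ _ c hI; apply: (inv_same hI) => //=.
  + by move=> x; rewrite updI_E; case: eqP => // ->.
  + by move=> x; rewrite updI_E; case: eqP => _ /=; exact: (I1 hI).
- move=> g0 i o q h z phi j rest H1 _ _ hb c s' hI.
  by apply: (@inv_bcast P tr g0 i o q h z phi j H1 _ _ _ hI hb).
- move=> g0 i o q h z phi j rest _ _ _ c hI; apply: (inv_same hI) => //=.
  + by move=> x; rewrite updI_E; case: eqP => // ->.
  + by move=> x; rewrite updI_E; case: eqP => _ /=; exact: (I1 hI).
Qed.

Lemma inv_exec (P : cop_params) (tr : seq (label P)) g : execution tr g -> Inv tr g.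
Proof.
elim=> [|tr' g0 a g1 _ IH hs]; last exact: inv_step IH hs.
split => //= x; rewrite /ginit /cinit /=.
move=> m h m0; case: eqP => [e|//]; by rewrite e in m0.
Qed.

Inductive star (P : cop_params) : gstate P -> gstate P -> Prop :=
  | star_refl g : star g g
  | star_step g a g1 g2 : star g g1 -> step g1 a g2 -> star g g2.

Lemma exec_split (P : cop_params) (tr : seq (label P)) g t :
  execution tr g -> t < size tr -> exists g0 g1,
  [/\ execution (take t tr) g0, step g0 (ev tr t) g1, execution (take t.+1 tr) g1 & star g1 g].
Proof.
move=> he; elim: he t => [|tr' g0 a g1 he IH hs] t //.
rewrite size_rcons ltnS leq_eqVlt => /orP [/eqP ->|ht].
  exists g0, g1; split.
  - by rewrite -cats1 take_size_cat.
  - by rewrite ev_last.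
  - rewrite take_oversize ?size_rcons //; exact: ex_step he hs.
  - exact: star_refl.
have [x0 [x1 [h1 h2 h3 h4]]] := IH t ht.
exists x0, x1; split.
- by rewrite -cats1 takel_cat // ltnW.
- by rewrite ev_rcons.
- by rewrite -cats1 takel_cat.
- exact: star_step h4 hs.
Qed.

Lemma mono_refl (P : cop_params) (c : cstate P) : cc c <= cc c /\ extends (cH c) (cH c).
Proof. by split => // m h. Qed.

Lemma step_mono (P : cop_params) (g g' : gstate P) a i :
  step g a g' -> cc (gcl g i) <= cc (gcl g' i) /\ extends (cH (gcl g i)) (cH (gcl g' i)).
Proof.
case.
- move=> g0 i0 o _ _ c tau /=; rewrite updI_E; case: eqP => [->|_] /=; exact: mono_refl.
- move=> *; exact: mono_refl.
- move=> *; exact: mono_refl.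
- move=> *; exact: mono_refl.
- move=> g0 i0 w rest H' gam mu u l _ _ hr c a0 _ hl phi /=; rewrite updI_E; case: eqP => [->|_] /=; last exact: mono_refl.
  have [g2 [m2 [hp _ _ _]]] := reply_spec hr; split => //; exact: proc_reply_ext hp.
- move=> g0 i0 w rest H' gam mu u l _ _ hr c a0 _ hl phi /=; rewrite updI_E; case: eqP => [->|_] /=; last exact: mono_refl.
  have [g2 [m2 [hp _ _ _]]] := reply_spec hr; split => //; exact: proc_reply_ext hp.
- move=> g0 i0 w rest _ _ _ c /=; rewrite updI_E; case: eqP => [->|_] /=; exact: mono_refl.
- move=> g0 i0 o q h z phi j rest H1 _ _ hb c s' /=; rewrite updI_E; case: eqP => [->|_] /=; last exact: mono_refl.
  have [_ _ _ he _] := bcast_spec (fun _ => True) hb; split => //.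
- move=> g0 i0 o q h z phi j rest _ _ _ c /=; rewrite updI_E; case: eqP => [->|_] /=; exact: mono_refl.
Qed.

Lemma star_mono (P : cop_params) (g g' : gstate P) i :
  star g g' -> cc (gcl g i) <= cc (gcl g' i) /\ extends (cH (gcl g i)) (cH (gcl g' i)).
Proof.
elim=> [g0|g0 a g1 g2 _ [IH1 IH2] hs]; first by split.
have [h1 h2] := step_mono i hs; split; first exact: leq_trans IH1 h1.
by move=> m h /IH2 /h2.
Qed.

Lemma confirm_inv (P : cop_params) (g g' : gstate P) i o q j :
  step g (LConfirm i o q j) g' -> exists h z phi H1,
  [/\ bcast_checks (glog g) (gcl g i) o q h z phi j = Some H1,
      cc (gcl g' i) = (cc (gcl g i)).+1 & cH (gcl g' i) = H1].
Proof.
move e: (LConfirm i o q j) => lab hs; case: hs e => //.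
move=> g0 i0 o0 q0 h z phi j0 rest H1 _ _ hb c s' [-> -> -> ->].
exists h, z, phi, H1; split => //=; rewrite updI_E eqxx //.
Qed.

Lemma chain_agree (P : cop_params)
  (hcf : forall h o l j h' o' l' j',
      hash P h o l j = hash P h' o' l' j' -> [/\ h = h', o = o', l = l' & j = j'])
  Q1 Q2 (A B : nat -> option (Hash P)) q h :
  ChainP Q1 A -> ChainP Q2 B -> A q = Some h -> B q = Some h ->
  forall d, d <= q -> A (q - d) = B (q - d) /\ A (q - d) <> None.
Proof.
move=> cA cB hA hB; elim=> [|d IH] hd; first by rewrite subn0 hA hB.
have [e ne] := IH (ltnW hd).
case hm: (A (q - d)) => [h'|]; last by rewrite hm in ne.
rewrite hm in e.
have m0 : 0 < q - d by rewrite subn_gt0.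
have [hpA [oA [jA [a1 [a2 _]]]]] := cA _ _ m0 hm.
have [hpB [oB [jB [b1 [b2 _]]]]] := cB _ _ m0 (esym e).
have [ehp _ _ _] := hcf _ _ _ _ _ _ _ _ (etrans (esym a2) b2).
have -> : q - d.+1 = (q - d).-1 by rewrite subnS.
by rewrite a1 b1 ehp.
Qed.

Lemma ev_lt (P : cop_params) (tr : seq (label P)) t i o r :
  ev tr t = LRespond i o r -> t < size tr.
Proof.
rewrite /ev; case: (ltnP t (size tr)) => // h; by rewrite nth_default.
Qed.

Lemma ev_take (P : cop_params) (tr : seq (label P)) n t :
  t < n -> ev (take n tr) t = ev tr t.
Proof. by move=> h; rewrite /ev nth_take. Qed.

Unset Implicit Arguments.

Theorem lemma4 (P : cop_params)
  (hash_collision_free : forall h o l j h' o' l' j',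
      hash P h o l j = hash P h' o' l' j' -> [/\ h = h', o = o', l = l' & j = j'])
  (tr : seq (label P)) (g : gstate P) (Hexec : execution tr g)
  (Huniq : unique_invocations tr)
  (k : 'I_(nclients P)) (o1 o2 : Op P) (t1 t2 : nat) :
  t1 < t2 -> confirms_at tr t1 k o1 -> confirms_at tr t2 k o2 ->
  ~ precedes tr o2 o1.
Proof.
move=> t12 [q1 [j1 e1]] [q2 [j2 e2]] [t [t' [tt' [[i [r er]] inv1]]]].
have st2 : t2 < size tr.
  rewrite /ev in e2; case: (ltnP t2 (size tr)) => // h; by rewrite nth_default in e2.
have [g0b [g1b [x0b sb x1b _]]] := exec_split Hexec st2.
have st1 : t1 < size (take t2 tr) by rewrite size_take st2.
have [g0a [g1a [x0a sa x1a stab]]] := exec_split x0b st1.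
rewrite ev_take // e1 in sa.
rewrite e2 in sb.
have [h1 [z1 [phi1 [H1a [hb1 hcc1 hcH1]]]]] := confirm_inv sa.
have [hq1 hin1 hH1 _ _] := bcast_spec (fun _ => True) hb1.
have [h2 [z2 [phi2 [H1b [hb2 hcc2 hcH2]]]]] := confirm_inv sb.
have [hq2 hin2 hH2 hext2 _] := bcast_spec (fun _ => True) hb2.
have I0a := inv_exec x0a.
have I0b := inv_exec x0b.
have I1b := inv_exec x1b.
have [s1 [_ _ [hp1 eh1] _]] := I6 I0a hin1.
have [sc [hsc [rc erc] _ [B [hB cB]]]] := I6 I0b hin2.
have [mcc mH] := star_mono k stab.
rewrite hcc1 hcH1 /= in mcc mH.
have cA := @I1 _ _ _ I1b k.
have hAq2 : cH (gcl g1b k) q2 = Some h2 by rewrite hcH2.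
have q12 : q1 <= q2 by rewrite hq2 hq1 ltnS ltnW.
have hA1 : cH (gcl g1b k) q1 = Some h1.
  by rewrite hcH2; apply: hext2; apply: mH.
have [agr _] := chain_agree hash_collision_free cA cB hAq2 hB (leq_subr q1 q2).
rewrite subKn // hA1 in agr.
have q10 : 0 < q1 by rewrite hq1.
have [hp' [o' [j' [_ [e' [x [hx [i1 ex]]]]]]]] := cB _ _ q10 (esym agr).
rewrite eh1 in e'.
have [_ eo _ _] := hash_collision_free _ _ _ _ _ _ _ _ e'.
subst o'.
have sct2 : sc < t2 by move: hsc; rewrite size_take st2.
rewrite ev_take ?(ltn_trans hx sct2) // in ex.
have ext : x = t' by apply: (Huniq x t' o1) => //; exists i1.
subst x.
rewrite ev_take // in erc.
have IG := inv_exec Hexec.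
have [xc [hxc exc nc]] := I4 IG (ltn_trans sct2 st2) erc.
have [xt [hxt ext nt]] := I4 IG (ev_lt er) er.
have exx : xc = xt by apply: (Huniq _ _ o2); [exists j2 | exists i].
subst xt.
rewrite exc in ext; case: ext => eji.
apply: (nc t) => //.
- exact: (ltn_trans tt' hx).
- by rewrite eji; exact: er.
Qed.
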